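(* Let $-\infty<a<b<\infty$, let $y:[a,b]\to\mathbb{R}$ be $L$-Lipschitz, and let $\gamma(t)=t+iy(t)$. Suppose $z_i\in\mathbb{C}$ and $\beta_i>0$ for $i=1,\dots,m$, with $\sum_{i=1}^m\beta_i=\beta<1$. Then $$\int_a^b\prod_{i=1}^m\left(\frac{1}{|\gamma(t)-z_i|}\right)^{\beta_i}|\gamma'(t)|\,dt<\mathrm{Const}_{L,a,b,\beta},$$ where $\mathrm{Const}_{L,a,b,\beta}$ is a constant depending only on $L,a,b,\beta$.
   Context: $|\gamma'(t)|=\sqrt{1+y'(t)^2}$, defined for almost every $t$. A function $y$ is $L$-Lipschitz if $|y(t_1)-y(t_2)|\le L|t_1-t_2|$ for all $t_1,t_2$. *)

(* Defs.v *)
From HB Require Import structures.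
From mathcomp Require Import all_boot all_order all_algebra.
From mathcomp Require Import all_classical all_reals all_analysis.
From mathcomp Require Import complex.
Set Implicit Arguments. Unset Strict Implicit. Unset Printing Implicit Defensive.
Import Order.TTheory GRing.Theory Num.Theory.
Local Open Scope ring_scope.

Definition Lipschitz_on_interval (R : realType) (a b L : R) (y : R -> R) : Prop :=
  forall t1 t2, t1 \in `[a, b] -> t2 \in `[a, b] ->
    `|y t1 - y t2| <= L * `|t1 - t2|.

Definition graph_curve (R : realType) (y : R -> R) (t : R) : R[i] :=
  (t +i* y t)%C.

(* |gamma'(t)| = sqrt(1 + y'(t)^2), meaningful for a.e. t *)
Definition speed (R : realType) (y : R -> R) (t : R) : R :=
  Num.sqrt (1 + (derive1 y t) ^+ 2).

Definition weight_integrand (R : realType) (m : nat) (z : 'I_m -> R[i])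
    (beta : 'I_m -> R) (y : R -> R) (t : R) : R :=
  (\prod_(i < m) ((ComplexField.Normc.normc (graph_curve y t - z i))^-1 `^ beta i)) * speed y t.

(* Main.v *)
Require Import Defs.
From HB Require Import structures.
From mathcomp Require Import all_boot all_order all_algebra.
From mathcomp Require Import all_classical all_reals all_analysis.
From mathcomp Require Import measurable_realfun.
From mathcomp Require Import complex.
From mathcomp Require Import ring lra.
Import Order.TTheory GRing.Theory Num.Theory.
Import numFieldNormedType.Exports.
Local Open Scope ring_scope.
Local Open Scope classical_set_scope.
Notation emf A f := (measurable_fun (U:=measurable_realfun.constructive_ereal_extended__canonical__measurable_structure_SigmaRing _) A f).
Lemma amgm (R : realType) (m : nat) (x w : 'I_m -> R) :
  (forall i, 0 <= x i) -> (forall i, 0 < w i) -> \sum_i w i = 1 ->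
  \prod_i (x i `^ w i) <= \sum_i w i * x i.
Proof.
move=> x0 w0 w1.
have [[j xj]|] := pselect (exists j, x j = 0).
  rewrite (bigD1 j) //= xj powR0 ?gt_eqF // mul0r.
  by apply: sumr_ge0 => i _; rewrite mulr_ge0 // ltW.
move=> /forallNP xn0.
have xp i : 0 < x i by rewrite lt_neqAle eq_sym x0 andbT; apply/eqP/xn0.
pose c := \sum_i w i * ln (x i).
have -> : \prod_i (x i `^ w i) = expR c.
  rewrite /c expR_sum; apply: eq_bigr => i _.
  by rewrite /powR gt_eqF.
have key i : expR c * (1 + (ln (x i) - c)) <= x i.
  have h := expR_ge1Dx (ln (x i) - c).
  have e : x i = expR c * expR (ln (x i) - c).
    by rewrite -expRD addrCA subrr addr0 lnK // posrE.
  by rewrite {2}e ler_wpM2l ?expR_ge0.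
apply: le_trans (_ : \sum_i w i * (expR c * (1 + (ln (x i) - c))) <= _); last first.
  by apply: ler_sum => i _; rewrite ler_wpM2l // ltW.
rewrite (eq_bigr (fun i => expR c * (w i + (w i * ln (x i) - w i * c)))); last first.
  by move=> i _; ring.
rewrite -mulr_sumr big_split /= big_split /= sumrN -mulr_suml w1 -/c mul1r subrr addr0 mulr1.
by [].
Qed.

Lemma le_integral_nm (R : realType) (D : set R) (f g : R -> \bar R) :
  (forall x, D x -> (0 <= f x)%E) -> (forall x, D x -> (f x <= g x)%E) ->
  (\int[lebesgue_measure]_(x in D) f x <= \int[lebesgue_measure]_(x in D) g x)%E.
Proof.
move=> f0 fg.
have g0 x : D x -> (0 <= g x)%E by move=> Dx; exact: le_trans (f0 x Dx) (fg x Dx).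
rewrite ge0_integralE // [X in (_ <= X)%E]ge0_integralE //.
apply: le_ereal_sup => _ [h /= hf <-]; exists h => //= x.
apply: le_trans (hf x) _; rewrite /patch; case: ifP => // /set_mem Dx.
exact: fg.
Qed.

Definition Bk {R : realType} (D x : R) (k : nat) : set R :=
  [set` (`[x - D / 2 ^+ k, x + D / 2 ^+ k])%R].
Definition Gd {R : realType} (D d r x t : R) : \bar R :=
  (d%:E + \sum_(0 <= k <oo) ((d * r ^+ k.+1) * \1_(Bk D x k) t)%:E)%E.

Lemma Gd_ge0 {R : realType} (D d r x t : R) : 0 <= d -> 0 <= r -> (0 <= Gd D d r x t)%E.
Proof.
move=> d0 r0; rewrite /Gd adde_ge0 ?lee_fin //; apply: nneseries_ge0 => k _ _.
by rewrite lee_fin mulr_ge0 ?mulr_ge0 ?exprn_ge0.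
Qed.

Lemma Gd_meas {R : realType} (D d r x : R) (A : set R) : 0 <= d -> 0 <= r ->
  emf A (fun t : R => Gd D d r x t).
Proof.
move=> d0 r0; apply: emeasurable_funD; first exact: measurable_cst.
apply: (@ge0_emeasurable_sum _ _ _ _ (fun k t => ((d * r ^+ k.+1) * \1_(Bk D x k) t)%:E) predT).
  by move=> k t _ _; rewrite lee_fin mulr_ge0 ?mulr_ge0 ?exprn_ge0.
move=> k _; apply/measurable_EFinP; apply: measurable_funM; first exact: measurable_cst.
apply: measurable_indic; exact: measurable_itv.
Qed.

Lemma geom_le {R : realType} (z : R) n : 0 <= z < 1 ->
  \sum_(0 <= i < n) z ^+ i <= (1 - z)^-1.
Proof.
move=> /andP[z0 z1].
have e : (\sum_(0 <= i < n) z ^+ i) * (1 - z) = 1 - z ^+ n.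
  elim: n => [|n IH]; first by rewrite big_geq // mul0r expr0 subrr.
  rewrite big_nat_recr //= mulrDl IH exprS; ring.
have nz : 1 - z != 0 by rewrite subr_eq0 gt_eqF.
have -> : \sum_(0 <= i < n) z ^+ i = (1 - z ^+ n) / (1 - z) by rewrite -e mulfK.
rewrite -[X in _ <= X]mul1r; apply: ler_wpM2r.
  by rewrite invr_ge0 subr_ge0 ltW.
by rewrite gerBl exprn_ge0.
Qed.

Lemma eseries_geom_le {R : realType} (q z : R) : 0 <= q -> 0 <= z < 1 ->
  (\sum_(0 <= k <oo) (q * z ^+ k)%:E <= (q / (1 - z))%:E)%E.
Proof.
move=> q0 hz.
apply: lime_le.
  by apply: is_cvg_nneseries => n _ _; rewrite lee_fin mulr_ge0 // exprn_ge0 // (andP hz).1.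
apply: nearW => n.
rewrite sumEFin lee_fin -mulr_sumr ler_wpM2l //.
exact: geom_le.
Qed.

Lemma Gd_int {R : realType} (a b D d r x : R) : a < b -> 0 <= D -> 0 <= d -> 0 <= r < 2 ->
  (\int[lebesgue_measure]_(t in `[a, b]) Gd D d r x t <=
   (d * (b - a) + (2 * D * d * r) / (1 - r / 2))%:E)%E.
Proof.
move=> ab D0 d0 /andP[r0 r2].
rewrite /Gd ge0_integralD; last 5 first.
- exact: measurable_itv.
- by move=> t _; rewrite lee_fin.
- exact: measurable_cst.
- by move=> t _; apply: nneseries_ge0 => k _ _; rewrite lee_fin mulr_ge0 ?mulr_ge0 ?exprn_ge0.
- apply: (@ge0_emeasurable_sum _ _ _ _ (fun k t => ((d * r ^+ k.+1) * \1_(Bk D x k) t)%:E) predT).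
    by move=> k t _ _; rewrite lee_fin mulr_ge0 ?mulr_ge0 ?exprn_ge0.
  move=> k _; apply/measurable_EFinP; apply: measurable_funM; first exact: measurable_cst.
  by apply: measurable_indic; exact: measurable_itv.
rewrite EFinD; apply: leeD.
  rewrite integral_cst //.
  have hm := @lebesgue_measure_itv R `[a, b]%R; rewrite /= lte_fin ab -EFinD in hm.
  rewrite le_eqVlt; apply/orP; left; apply/eqP; rewrite EFinM; congr (_ * _)%E; exact: hm.
rewrite integral_nneseries //; last 2 first.
- move=> k; apply/measurable_EFinP; apply: measurable_funM; first exact: measurable_cst.
  by apply: measurable_indic; exact: measurable_itv.
- by move=> k t _; rewrite lee_fin mulr_ge0 ?mulr_ge0 ?exprn_ge0.
apply: le_trans (eseries_geom_le (2 * D * d * r) (r / 2) _ _); last 2 first.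
- by rewrite !mulr_ge0.
- by rewrite divr_ge0 //= ltr_pdivrMr // mul1r.
apply: lee_nneseries.
  move=> k _ _; apply: integral_ge0 => t _.
  by rewrite lee_fin mulr_ge0 ?mulr_ge0 ?exprn_ge0.
move=> k _.
have hZ := @integralZl_indic _ _ _ lebesgue_measure `[a, b] (measurable_itv _) (fun _ => Bk D x k) (d * r ^+ k.+1).
rewrite /= in hZ; rewrite hZ; last 2 first.
- by rewrite ltNge mulr_ge0 ?exprn_ge0.
- exact: measurable_itv.
rewrite integral_indic //; last exact: measurable_itv.
have hB : (lebesgue_measure (Bk D x k `&` `[a, b]) <= (2 * D / 2 ^+ k)%:E)%E.
  have hB1 : (lebesgue_measure (Bk D x k `&` `[a, b]) <= lebesgue_measure (Bk D x k))%E.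
    apply: le_measure; last exact: subIsetl.
    - by rewrite inE; apply: measurableI; exact: measurable_itv.
    - by rewrite inE; exact: measurable_itv.
  apply: le_trans hB1 _.
  rewrite /Bk lebesgue_measure_itv /=.
  case: ifP => _; last by rewrite lee_fin divr_ge0 ?mulr_ge0 ?exprn_ge0.
  rewrite -EFinD lee_fin; rewrite le_eqVlt; apply/orP; left; apply/eqP; field.
  by rewrite expf_neq0.
apply: le_trans (lee_wpmul2l _ hB) _.
  by rewrite lee_fin mulr_ge0 ?exprn_ge0.
rewrite -EFinM lee_fin le_eqVlt; apply/orP; left; apply/eqP.
rewrite exprS expr_div_n; field.
by rewrite expf_neq0.
Qed.

Lemma Gd_partial {R : realType} (D d r x t : R) n : 0 <= d -> 0 <= r ->
  ((d + \sum_(0 <= k < n) d * r ^+ k.+1 * \1_(Bk D x k) t)%:E <= Gd D d r x t)%E.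
Proof.
move=> d0 r0; rewrite EFinD /Gd leeD2l // -sumEFin.
apply: nneseries_lim_ge => k _ _.
by rewrite lee_fin mulr_ge0 ?mulr_ge0 ?exprn_ge0.
Qed.

Lemma in_Bk {R : realType} (D x t : R) k : `|t - x| <= D / 2 ^+ k -> \1_(Bk D x k) t = 1 :> R.
Proof.
move=> h; rewrite indicE mem_set // /Bk /= in_itv /=.
by move: h; rewrite ler_norml => /andP[h1 h2]; apply/andP; split; lra.
Qed.

Lemma Gd_center {R : realType} (D d r x : R) (v : R) : 0 <= D -> 0 < d -> 1 <= r ->
  (v%:E <= Gd D d r x x)%E.
Proof.
move=> D0 d0 r1.
pose n := Num.truncn (`|v| / d).
apply: le_trans (Gd_partial D d r x x n.+1 (ltW d0) (le_trans ler01 r1)).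
rewrite lee_fin.
have hs : n.+1%:R * d <= \sum_(0 <= k < n.+1) d * r ^+ k.+1 * \1_(Bk D x k) x.
  have -> : n.+1%:R * d = \sum_(0 <= k < n.+1) d.
    by rewrite sumr_const_nat subn0 mulr_natl.
  apply: ler_sum_nat => k _.
  rewrite in_Bk ?subrr ?normr0 ?divr_ge0 ?exprn_ge0 // mulr1.
  by rewrite ler_peMr ?(ltW d0) // exprn_ege1.
apply: le_trans _ (lerD (lexx d) hs).
have h1 : `|v| / d < n.+1%:R by exact: Num.Theory.truncnS_gt.
have : `|v| < n.+1%:R * d by rewrite -ltr_pdivrMr.
have := ler_norm v; nra.
Qed.

Lemma pow2R {R : realType} (b : R) n : ((2 ^+ n : R) `^ b) = (2 `^ b) ^+ n.
Proof. by rewrite -powR_mulrn // powRAC powR_mulrn // powR_ge0. Qed.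

Lemma Gd_pt {R : realType} (D b x t u : R) : 0 < D -> 0 <= b -> 0 <= u -> t != x ->
  u <= `|t - x|^-1 -> ((u `^ b)%:E <= Gd D ((D^-1) `^ b) (2 `^ b) x t)%E.
Proof.
move=> D0 b0 u0 tx hu.
set d := (D^-1) `^ b; set r := 2 `^ b.
have d0 : 0 <= d by exact: powR_ge0.
have r1 : 1 <= r.
  by rewrite /r -{1}(powRr0 2); apply: ler_powR => //; rewrite ler1n.
have r0 : 0 <= r by exact: le_trans ler01 r1.
set s := `|t - x|.
have s0 : 0 < s by rewrite normr_gt0 subr_eq0.
have hmono : forall p q : R, 0 <= p -> p <= q -> p `^ b <= q `^ b.
  move=> p q p0 pq; apply: ge0_ler_powR => //; rewrite nnegrE //; exact: le_trans pq.
case: (leP s D) => hs; last first.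
  apply: le_trans (Gd_partial D d r x t 0 d0 r0).
  rewrite big_geq // addr0 lee_fin; apply: hmono => //.
  apply: le_trans hu _; rewrite lef_pV2 ?posrE //; exact: ltW.
have ex : exists n, D / 2 ^+ n < s.
  exists (Num.truncn (D / s)).+1.
  have h1 := Num.Theory.truncnS_gt (D / s).
  have h2 : ((Num.truncn (D / s)).+1%:R : R) <= 2 ^+ (Num.truncn (D / s)).+1.
    rewrite -natrX ler_nat; apply: ltnW; exact: ltn_expl.
  have h3 : D / s < 2 ^+ (Num.truncn (D / s)).+1 by exact: lt_le_trans h1 h2.
  rewrite ltr_pdivrMr ?exprn_gt0 // mulrC -ltr_pdivrMr //.
case: (ex_minnP ex) => n Pn minn.
case: n Pn minn => [|k] Pk mink.
  by move: Pk; rewrite expr0 divr1 ltNge hs.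
have hk : s <= D / 2 ^+ k.
  by rewrite leNgt; apply/negP => /mink; rewrite ltnn.
apply: le_trans (Gd_partial D d r x t k.+1 d0 r0).
rewrite lee_fin big_nat_recr //= in_Bk // mulr1.
have hsum : 0 <= \sum_(0 <= i < k) d * r ^+ i.+1 * \1_(Bk D x i) t.
  by apply: sumr_ge0 => i _; rewrite mulr_ge0 ?mulr_ge0 ?exprn_ge0.
have hp : u `^ b <= d * r ^+ k.+1.
  apply: le_trans (hmono u (2 ^+ k.+1 * D^-1) u0 _) _.
    apply: le_trans hu _.
    have -> : 2 ^+ k.+1 * D^-1 = (D / 2 ^+ k.+1)^-1 by rewrite invf_div.
    by rewrite lef_pV2 ?posrE ?divr_gt0 ?exprn_gt0 //; exact: ltW.
  by rewrite powRM ?exprn_ge0 ?invr_ge0 ?(ltW D0) // pow2R mulrC.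
lra.
Qed.
Lemma Lip_L0 {R : realType} (a b L : R) (y : R -> R) : a < b ->
  Lipschitz_on_interval a b L y -> 0 <= L.
Proof.
move=> ab hL; have := hL a b.
rewrite !in_itv /= !lexx (ltW ab) => /(_ isT isT) h.
have h1 : 0 < `|a - b| by rewrite normr_gt0 subr_eq0 lt_eqF.
have := le_trans (normr_ge0 _) h.
by rewrite pmulr_lge0.
Qed.

Lemma derive1_le {R : realType} (a b L : R) (y : R -> R) (t : R) :
  Lipschitz_on_interval a b L y -> 0 <= L -> a < t < b -> `|derive1 y t| <= L.
Proof.
move=> hL L0 /andP[ta tb].
set q := fun h : R => h^-1 *: (y (h + t) - y t).
have H2 : \forall h \near (0:R)^', `|q h| <= L.
  have e0 : 0 < Num.min (t - a) (b - t) by rewrite lt_min !subr_gt0 ta tb.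
  have Hn : \forall h \near (0:R)^', h != 0 by exact: nbhs_dnbhs_neq.
  have Hl : \forall h \near (0:R)^', `|h| < Num.min (t - a) (b - t).
    by apply: nbhs_dnbhs; apply/nbhs_ballP; exists (Num.min (t - a) (b - t)) => // x; rewrite /ball /= sub0r normrN.
  near=> h.
  have h0 : h != 0 by near: h.
  have hl : `|h| < Num.min (t - a) (b - t) by near: h.
  move: hl; rewrite lt_min => /andP[h1 h2].
  have hin : h + t \in `[a, b]%R.
    rewrite in_itv /=; move: h1 h2; rewrite !ltr_norml => /andP[? ?] /andP[? ?].
    apply/andP; split; lra.
  have tin : t \in `[a, b]%R by rewrite in_itv /= !ltW.
  have := hL _ _ hin tin; rewrite addrK => hh.
  rewrite /q normrZ normfV ler_pdivrMl ?normr_gt0 //.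
  by rewrite mulrC.
have [cv|ncv] := pselect (cvg (q @ (0:R)^')).
  rewrite leNgt; apply/negP => hlt.
  have H1 : \forall h \near (0:R)^', L < `|q h| by exact: (cvgr_norm_gt _ cv _ hlt).
  near (0:R)^' => h.
  have hh1 : L < `|q h| by near: h.
  have hh2 : `|q h| <= L by near: h.
  by move: (lt_le_trans hh1 hh2); rewrite ltxx.
by rewrite /derive1 -/q (dvgP ncv) normr0.
Unshelve. all: by end_near.
Qed.

Lemma normc_ge {R : realType} (t w : R) (z : R[i]) :
  `|t - complex.Re z| <= ComplexField.Normc.normc ((t +i* w)%C - z).
Proof.
case: z => p q /=.
rewrite -(sqrtr_sqr (t - p)).
have h : (t - p) ^+ 2 <= (t - p) ^+ 2 + (w - q) ^+ 2 by rewrite lerDl sqr_ge0.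
by rewrite ler_sqrt // addr_ge0 ?sqr_ge0.
Qed.

Lemma u_bound {R : realType} (D b x t u : R) : 0 < D -> 0 <= b < 1 -> 0 <= u ->
  (t != x -> u <= `|t - x|^-1) -> ((u `^ b)%:E <= Gd D ((D^-1) `^ b) (2 `^ b) x t)%E.
Proof.
move=> D0 /andP[b0 b1] u0 hu.
have [tx|tx] := eqVneq t x.
  rewrite tx; apply: Gd_center; first exact: ltW.
    by apply: powR_gt0; rewrite invr_gt0.
  by rewrite -{1}(powRr0 2); apply: ler_powR => //; rewrite ler1n.
exact: (Gd_pt _ _ _ _ _ D0 b0 u0 tx (hu tx)).
Qed.

Lemma speed_le {R : realType} (L : R) (y : R -> R) t :
  `|derive1 y t| <= L -> speed y t <= Num.sqrt (1 + L ^+ 2).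
Proof.
move=> h; rewrite /speed ler_sqrt ?addr_ge0 ?sqr_ge0 // lerD2l.
move: h; rewrite ler_norml => /andP[h1 h2]; nra.
Qed.

Local Close Scope classical_set_scope.

Theorem lemma2p8 (R : realType) (L a b beta : R) :
  a < b -> beta < 1 ->
  exists C : R,
    forall (m : nat) (z : 'I_m -> R[i]) (betas : 'I_m -> R) (y : R -> R),
      (forall i, 0 < betas i) ->
      \sum_(i < m) betas i = beta ->
      Lipschitz_on_interval a b L y ->
      (\int[lebesgue_measure]_(t in `[a, b]) (weight_integrand z betas y t)%:E
        < C%:E)%E.
Proof.
Local Open Scope classical_set_scope.
move=> ab bt1.
set D := b - a.
have D0 : 0 < D by rewrite subr_gt0.
set be := Num.max beta 0.
have be0 : 0 <= be by rewrite le_max lexx orbT.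
have be1 : be < 1 by rewrite gt_max bt1 ltr01.
set d := (D^-1) `^ be; set r := 2 `^ be.
have d0 : 0 <= d by exact: powR_ge0.
have r1 : 1 <= r by rewrite /r -{1}(powRr0 2); apply: ler_powR => //; rewrite ler1n.
have r2 : r < 2.
  have l0 : 0 < ln (2 : R) by apply: ln_gt0; rewrite ltr1n.
  rewrite /r /powR pnatr_eq0 /= -[X in _ < X]lnK ?posrE // ltr_expR.
  nra.
have r02 : 0 <= r < 2 by rewrite r2 andbT (le_trans ler01 r1).
set K := d * (b - a) + 2 * D * d * r / (1 - r / 2).
have hGint x : (\int[lebesgue_measure]_(t in `[a, b]) Gd D d r x t <= K%:E)%E.
  exact: Gd_int ab (ltW D0) d0 r02.
have K0 : 0 <= K.
  rewrite -lee_fin; apply: le_trans (hGint a); apply: integral_ge0 => t _.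
  exact: Gd_ge0 d0 (le_trans ler01 r1).
set S := Num.sqrt (1 + L ^+ 2).
have S0 : 0 <= S by exact: sqrtr_ge0.
exists (S * (D + K) + 2 * K + 1).
move=> m z betas y bpos bsum hL.
have L0 := Lip_L0 _ _ _ _ ab hL.
set G := fun x t => Gd D d r x t.
have G0 x t : (0 <= G x t)%E by exact: Gd_ge0 d0 (le_trans ler01 r1).
have mG x : emf `[a, b] (G x) by exact: Gd_meas d0 (le_trans ler01 r1).
set w := fun i => betas i / beta.
have w0 i : 0 <= w i.
  rewrite /w; have : 0 <= beta by rewrite -bsum; apply: sumr_ge0 => j _; exact: ltW.
  by move=> h; rewrite divr_ge0 // ltW.
have sw : \sum_i w i <= 1.
  rewrite /w -mulr_suml bsum; have [->|bn0] := eqVneq beta 0; first by rewrite mul0r ler01.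
  by rewrite divff.
set A := fun t => (1%:E + \sum_(i < m) (w i)%:E * G (complex.Re (z i)) t)%E.
have A0 t : (0 <= A t)%E.
  by rewrite adde_ge0 ?lee_fin // sume_ge0 // => i _; rewrite mule_ge0 ?lee_fin.
have mA : emf `[a, b] A.
  apply: emeasurable_funD; first exact: measurable_cst.
  by apply: emeasurable_sum => i; apply: measurable_funeM; exact: mG.
set H := fun t => (S%:E * A t + G a t + G b t)%E.
have Hint : (\int[lebesgue_measure]_(t in `[a, b]) H t <= (S * (D + K) + 2 * K)%:E)%E.
  have mI : measurable `[a, b]%classic by exact: measurable_itv.
  have hab : lebesgue_measure `[a, b]%classic = D%:E.
    by have hm := @lebesgue_measure_itv R `[a, b]%R; rewrite /= lte_fin ab -EFinD in hm.
  have IA : (\int[lebesgue_measure]_(t in `[a, b]) A t <= (D + K)%:E)%E.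
    rewrite /A ge0_integralD; last 5 first.
    - exact: measurable_itv.
    - by move=> t _; rewrite lee_fin.
    - exact: measurable_cst.
    - by move=> t _; rewrite sume_ge0 // => i _; rewrite mule_ge0 ?lee_fin.
    - by apply: emeasurable_sum => i; apply: measurable_funeM; exact: mG.
    rewrite EFinD; apply: leeD.
      by rewrite integral_cst // mul1e le_eqVlt; apply/orP; left; apply/eqP; exact: hab.
    have mf i : emf `[a, b] (fun t => ((w i)%:E * G (complex.Re (z i)) t)%E).
      by apply: measurable_funeM; exact: mG.
    have f0 i t : `[a, b] t -> (0 <= ((w i)%:E * G (complex.Re (z i)) t))%E.
      by move=> _; rewrite mule_ge0 ?lee_fin.
    have := @ge0_integral_sum _ _ _ lebesgue_measure _ (measurable_itv `[a, b]%R) _ _ mf f0 (index_enum 'I_m).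
    move=> ->.
    apply: le_trans (_ : (\sum_(i < m) ((w i) * K)%:E <= _)%E).
      apply: lee_sum => i _.
      rewrite (@ge0_integralZl_EFin _ _ _ lebesgue_measure _ (measurable_itv `[a, b]%R) (G (complex.Re (z i))) (fun t _ => G0 _ t) (mG _) (w i) (w0 i)).
      by rewrite [X in (_ <= X)%E]EFinM; apply: lee_wpmul2l; [rewrite lee_fin; exact: w0 | exact: hGint].
    rewrite sumEFin lee_fin -mulr_suml -[X in _ <= X]mul1r ler_wpM2r //.
  have mSA : emf `[a, b] (fun t => (S%:E * A t)%E) by exact: measurable_funeM mA.
  have m1 : emf `[a, b] (fun t => (S%:E * A t + G a t)%E) by exact: emeasurable_funD mSA (mG a).
  rewrite /H (@ge0_integralD _ _ _ lebesgue_measure _ (measurable_itv `[a, b]%R) (fun t => (S%:E * A t + G a t)%E) (G b) _ m1 _ (mG b)); last 2 first.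
  - by move=> t _; rewrite adde_ge0 ?mule_ge0 ?lee_fin.
  - by move=> t _.
  rewrite (@ge0_integralD _ _ _ lebesgue_measure _ (measurable_itv `[a, b]%R) (fun t => (S%:E * A t)%E) (G a) _ mSA _ (mG a)); last 2 first.
  - by move=> t _; rewrite mule_ge0 ?lee_fin.
  - by move=> t _.
  rewrite (@ge0_integralZl_EFin _ _ _ lebesgue_measure _ (measurable_itv `[a, b]%R) A (fun t _ => A0 t) mA S S0).
  have -> : S * (D + K) + 2 * K = S * (D + K) + K + K by ring.
  rewrite !EFinD; apply: leeD; last exact: hGint.
  apply: leeD; last exact: hGint.
  by rewrite EFinM; apply: lee_wpmul2l => //; rewrite lee_fin.
have wle : forall t, `[a, b] t -> (0 <= (weight_integrand z betas y t)%:E)%E /\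
    ((weight_integrand z betas y t)%:E <= H t)%E.
  move=> t /=; rewrite in_itv /= => /andP[ta tb].
  set u := fun i => (ComplexField.Normc.normc (graph_curve y t - z i))^-1.
  set P := \prod_(i < m) (u i `^ betas i).
  have P0 : 0 <= P by apply: prodr_ge0 => i _; exact: powR_ge0.
  have spd0 : 0 <= speed y t by exact: sqrtr_ge0.
  have -> : weight_integrand z betas y t = P * speed y t by [].
  split; first by rewrite lee_fin mulr_ge0.
  have SA0 : (0 <= S%:E * A t)%E by rewrite mule_ge0 ?lee_fin.
  have HGa : (G a t <= H t)%E.
    rewrite /H; apply: (le_trans _ (leeDl _ (G0 b t))).
    exact: lee_paddl SA0 (lexx _).
  have HGb : (G b t <= H t)%E by apply: lee_paddl (lexx _); rewrite adde_ge0.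
  have dpos : 0 < d by apply: powR_gt0; rewrite invr_gt0.
  have [eta|nta] := eqVneq t a.
    by apply: (le_trans _ HGa); rewrite eta; apply: Gd_center => //; exact: ltW.
  have [etb|ntb] := eqVneq t b.
    by apply: (le_trans _ HGb); rewrite etb; apply: Gd_center => //; exact: ltW.
  have tab : a < t < b by rewrite !lt_neqAle eq_sym nta ta ntb tb.
  have spdS : speed y t <= S by apply: speed_le; apply: (derive1_le _ _ _ _ _ hL L0 tab).
  set x := fun i => u i `^ be.
  have u0 i : 0 <= u i by rewrite /u invr_ge0; case: (graph_curve y t - z i) => p q /=; exact: sqrtr_ge0.
  have hx i : ((x i)%:E <= G (complex.Re (z i)) t)%E.
    apply: u_bound => //; first by rewrite be0 be1.
    move=> tx; have p : 0 < `|t - complex.Re (z i)| by rewrite normr_gt0 subr_eq0.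
    have h := normc_ge t (y t) (z i).
    rewrite /u lef_pV2 ?posrE //; exact: lt_le_trans p h.
  have hPle : P <= 1 + \sum_(i < m) w i * x i.
    have sx : 0 <= \sum_(i < m) w i * x i.
      by apply: sumr_ge0 => i _; rewrite mulr_ge0 // powR_ge0.
    case: (pselect (exists i : 'I_m, True)) => [[i0 _]|none]; last first.
      rewrite /P big1 ?lerDl // => i _; exfalso; apply: none; by exists i.
    have bpos' : 0 < beta.
      rewrite -bsum (bigD1 i0) //=.
      have := bpos i0; have : 0 <= \sum_(j < m | j != i0) betas j.
        by apply: sumr_ge0 => j _; exact: ltW.
      lra.
    have bee : be = beta by rewrite /be max_l // ltW.
    have -> : P = \prod_(i < m) (x i `^ w i).
      apply: eq_bigr => i _; rewrite /x -powRrM bee /w mulrC divfK //.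
      exact: lt0r_neq0.
    apply: ler_wpDl; first exact: ler01.
    apply: amgm => //; first by move=> i; exact: powR_ge0.
      by move=> i; rewrite /w divr_gt0.
    by rewrite /w -mulr_suml bsum divff // lt0r_neq0.
  apply: le_trans (_ : ((S * (1 + \sum_(i < m) w i * x i))%:E <= H t)%E).
    rewrite lee_fin; apply: le_trans (ler_wpM2l P0 spdS) _; rewrite mulrC. exact: (ler_wpM2l S0 hPle).
  rewrite /H; apply: lee_paddr (G0 b t) _; apply: lee_paddr (G0 a t) _.
  rewrite EFinM; apply: lee_wpmul2l; first by rewrite lee_fin.
  rewrite /A EFinD leeD2l // -sumEFin; apply: lee_sum => i _.
  by rewrite EFinM; apply: lee_wpmul2l; [rewrite lee_fin; exact: w0 | exact: hx].
apply: le_lt_trans (le_integral_nm _ _ _ _ (fun t ht => (wle t ht).1) (fun t ht => (wle t ht).2)) _.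
apply: le_lt_trans Hint _.
by rewrite lte_fin ltrDl ltr01.
Qed.
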